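(* Let $f:\{0,1\}^n\to\{0,1\}$ and consider a memoryless quantum query algorithm that computes $f$ in $T$ queries, with intermediate states $|\psi_x^t\rangle$. If $x,y\in\{0,1\}^n$ satisfy $f(x)\neq f(y)$, then $$\sum_{t=0}^{T-1}\sqrt{\sum_{i:\,x_i\neq y_i}\big\|(|i\rangle\langle i|\otimes I)|\psi_x^t\rangle\big\|^2}\ \ge\ \frac16 .$$
   Context: Let $\mathcal H$ be the $2n$-dimensional Hilbert space with orthonormal basis $\{|i,b\rangle: i\in\{1,\dots,n\}, b\in\{0,1\}\}$ (index register $i$, value register $b$). For $x\in\{0,1\}^n$ the binary oracle is $O_x|i,b\rangle=|i,b\oplus x_i\rangle$. A memoryless quantum query algorithm with query complexity $T$ is a sequence $U_0,\dots,U_T$ of unitaries on $\mathcal H$; its intermediate state after $t$ queries on input $x$ is $|\psi_x^t\rangle=U_tO_x\cdots U_1O_xU_0|\mathrm{init}\rangle$ for a fixed basis state $|\mathrm{init}\rangle$. It outputs $b$ with probability $\|(I\otimes|b\rangle\langle b|)|\psi_x^T\rangle\|^2$, and computes $f$ if for every $x$ it outputs $f(x)$ with probability at least $2/3$. *)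

(* Defs.v *)
From mathcomp Require Import all_boot all_order all_algebra.
Set Implicit Arguments. Unset Strict Implicit. Unset Printing Implicit Defensive.
Import Order.TTheory GRing.Theory Num.Theory.
Local Open Scope ring_scope.

(* Basis index of H = C^n (x) C^2 : pairs (i, b), i : 'I_n, b : bool. *)
Definition idx (n : nat) : finType := ('I_n * bool)%type.

Definition vec (C : numClosedFieldType) (n : nat) := idx n -> C.
Definition op (C : numClosedFieldType) (n : nat) := idx n -> idx n -> C.

Definition apply (C : numClosedFieldType) (n : nat) (U : op C n) (v : vec C n)
  : vec C n := fun j => \sum_(k : idx n) U j k * v k.

(* U is unitary: U^dagger U = I (equivalent to unitarity in finite dimension). *)
Definition unitary (C : numClosedFieldType) (n : nat) (U : op C n) : Prop :=
  forall j k : idx n, \sum_(l : idx n) (U l j)^* * U l k = (j == k)%:R.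

Definition basis_vec (C : numClosedFieldType) (n : nat) (a : idx n) : vec C n :=
  fun j => (j == a)%:R.

(* Binary oracle O_x |i,b> = |i, b xor x_i>, so (O_x v)(i,b) = v(i, b xor x_i). *)
Definition oracle (C : numClosedFieldType) (n : nat) (x : {ffun 'I_n -> bool})
  (v : vec C n) : vec C n := fun j => v (j.1, xorb j.2 (x j.1)).

Fixpoint state (C : numClosedFieldType) (n : nat) (U : nat -> op C n)
  (init : idx n) (x : {ffun 'I_n -> bool}) (t : nat) : vec C n :=
  match t with
  | 0 => apply (U 0%N) (basis_vec C init)
  | t'.+1 => apply (U t) (oracle x (state U init x t'))
  end.

(* Probability of outputting b: || (I (x) |b><b|) psi ||^2. *)
Definition out_prob (C : numClosedFieldType) (n : nat) (v : vec C n) (b : bool) : C :=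
  \sum_(i : 'I_n) `|v (i, b)| ^+ 2.

Definition computes (C : numClosedFieldType) (n T : nat) (U : nat -> op C n)
  (init : idx n) (f : {ffun 'I_n -> bool} -> bool) : Prop :=
  (forall t, (t <= T)%N -> unitary (U t)) /\
  forall x : {ffun 'I_n -> bool}, 2%:R / 3%:R <= out_prob (state U init x T) (f x).

Definition index_weight (C : numClosedFieldType) (n : nat) (v : vec C n) (i : 'I_n) : C :=
  \sum_(b : bool) `|v (i, b)| ^+ 2.

(* Main.v *)
Require Import Defs.
From mathcomp Require Import all_boot all_order all_algebra ring.
Import Order.TTheory GRing.Theory Num.Theory.
Set Implicit Arguments. Unset Strict Implicit. Unset Printing Implicit Defensive.
Local Open Scope ring_scope.

Section Aux.
Variable C : numClosedFieldType.

Lemma nn_real (z : C) : 0 <= z -> z \is Num.real.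
Proof. exact: ger0_real. Qed.

Lemma sqr_real_ge0 (z : C) : z \is Num.real -> 0 <= z ^+ 2.
Proof. by move=> zr; apply: real_exprn_even_ge0. Qed.

Lemma sq_id (p q x y : C) : q ^+ 2 * x ^+ 2 + p ^+ 2 * y ^+ 2 - p * q * (x * y) *+ 2
     = (q * x - p * y) ^+ 2.
Proof. ring. Qed.

Lemma id2 (p q : C) : p * q * (p * q) *+ 2 = q ^+ 2 * p ^+ 2 + p ^+ 2 * q ^+ 2.
Proof. ring. Qed.

Lemma CS (I : finType) (a b : I -> C) : (forall i, 0 <= a i) -> (forall i, 0 <= b i) ->
  \sum_i a i * b i <= sqrtC (\sum_i a i ^+ 2) * sqrtC (\sum_i b i ^+ 2).
Proof.
move=> a0 b0.
have sa0 : 0 <= \sum_i a i ^+ 2 by apply: sumr_ge0 => i _; rewrite exprn_ge0.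
have sb0 : 0 <= \sum_i b i ^+ 2 by apply: sumr_ge0 => i _; rewrite exprn_ge0.
set p := sqrtC (\sum_i a i ^+ 2); set q := sqrtC (\sum_i b i ^+ 2).
have p0 : 0 <= p by rewrite sqrtC_ge0.
have q0 : 0 <= q by rewrite sqrtC_ge0.
have key : forall i, p * q * (a i * b i) *+ 2 <= q ^+ 2 * a i ^+ 2 + p ^+ 2 * b i ^+ 2.
  move=> i; rewrite -subr_ge0.
  have -> : q ^+ 2 * a i ^+ 2 + p ^+ 2 * b i ^+ 2 - p * q * (a i * b i) *+ 2
     = (q * a i - p * b i) ^+ 2 by apply: sq_id.
  apply: sqr_real_ge0; apply: rpredB; apply: rpredM; exact: nn_real.
have S : p * q * (\sum_i a i * b i) *+ 2 <= (p * q) * (p * q) *+ 2.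
  have -> : (p * q) * (p * q) *+ 2 = q ^+ 2 * (\sum_i a i ^+ 2) + p ^+ 2 * (\sum_i b i ^+ 2).
    have hp : p ^+ 2 = \sum_i a i ^+ 2 by rewrite sqrtCK.
    have hq : q ^+ 2 = \sum_i b i ^+ 2 by rewrite sqrtCK.
    by rewrite -hp -hq; apply: id2.
  rewrite !mulr_sumr -big_split /= -sumrMnl; apply: ler_sum => i _; exact: key.
have sab0 : 0 <= \sum_i a i * b i by apply: sumr_ge0 => i _; rewrite mulr_ge0.
have [pq0|pq0] := eqVneq (p * q) 0.
  suff -> : \sum_i a i * b i = 0 by rewrite pq0.
  move: pq0 => /eqP; rewrite mulf_eq0 => /orP [] /eqP.
    rewrite /p => /eqP; rewrite sqrtC_eq0 => /eqP /psumr_eq0P H.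
    apply: big1 => i _; have /eqP := H (fun j _ => exprn_ge0 2 (a0 j)) i isT.
    by rewrite expf_eq0 /= => /eqP ->; rewrite mul0r.
  rewrite /q => /eqP; rewrite sqrtC_eq0 => /eqP /psumr_eq0P H.
  apply: big1 => i _; have /eqP := H (fun j _ => exprn_ge0 2 (b0 j)) i isT.
  by rewrite expf_eq0 /= => /eqP ->; rewrite mulr0.
have pqp : 0 < p * q by rewrite lt_def pq0 mulr_ge0.
rewrite -(ler_pM2l pqp) -(ler_pMn2r (n:=2)) //.
Qed.


Variable n : nat.

Definition nrm2 (v : vec C n) : C := \sum_(j : idx n) `|v j| ^+ 2.

Lemma nrm2_ge0 v : 0 <= nrm2 v.
Proof. by apply: sumr_ge0 => j _; rewrite exprn_ge0. Qed.

Lemma nrm2_ext u v : (forall j, u j = v j) -> nrm2 u = nrm2 v.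
Proof. by move=> h; apply: eq_bigr => j _; rewrite h. Qed.

Lemma sqrtC_nrm_ge0 v : 0 <= sqrtC (nrm2 v).
Proof. by rewrite sqrtC_ge0 nrm2_ge0. Qed.

Lemma nrm_triangle (u v : vec C n) :
  sqrtC (nrm2 (fun j => u j + v j)) <= sqrtC (nrm2 u) + sqrtC (nrm2 v).
Proof.
have h0 : 0 <= sqrtC (nrm2 u) + sqrtC (nrm2 v) by rewrite addr_ge0 ?sqrtC_nrm_ge0.
rewrite -(sqrCK h0) ler_sqrtC ?qualifE /= ?nrm2_ge0 ?exprn_ge0 //.
have cs := @CS (idx n) (fun j => `|u j|) (fun j => `|v j|) (fun j => normr_ge0 (u j)) (fun j => normr_ge0 (v j)).
apply: (le_trans (y := \sum_(j : idx n) (`|u j| + `|v j|) ^+ 2)).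
  apply: ler_sum => j _; rewrite ler_pXn2r ?qualifE /= ?addr_ge0 // ?ler_normD //.
have -> : \sum_(j : idx n) (`|u j| + `|v j|) ^+ 2 = nrm2 u + nrm2 v + (\sum_(j : idx n) `|u j| * `|v j|) *+ 2.
  rewrite /nrm2 -sumrMnl -!big_split /=; apply: eq_bigr => j _; ring.
have -> : (sqrtC (nrm2 u) + sqrtC (nrm2 v)) ^+ 2
   = nrm2 u + nrm2 v + (sqrtC (nrm2 u) * sqrtC (nrm2 v)) *+ 2.
  by rewrite sqrrD !sqrtCK addrAC.
by rewrite lerD2l lerMn2r /=; apply: cs.
Qed.

Lemma apply_nrm2 (U : op C n) (v : vec C n) : unitary U -> nrm2 (apply U v) = nrm2 v.
Proof.
move=> HU; rewrite /nrm2 /apply.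
transitivity (\sum_(j : idx n) \sum_(k : idx n) \sum_(k' : idx n)
               (v k * (v k')^*) * (U j k * (U j k')^*)).
  apply: eq_bigr => j _; rewrite normCK rmorph_sum big_distrl /=.
  apply: eq_bigr => k _; rewrite big_distrr /=.
  apply: eq_bigr => k' _; rewrite rmorphM /=; ring.
rewrite exchange_big; apply: eq_bigr => k _ /=.
rewrite exchange_big /= (bigD1 k) //= [X in _ + X]big1 ?addr0.
  rewrite -big_distrr /= normCK.
  have -> : \sum_(i : idx n) U i k * (U i k)^* = 1.
    transitivity ((k == k)%:R : C); last by rewrite eqxx.
    by rewrite -(HU k k); apply: eq_bigr => i _; rewrite mulrC.
  by rewrite mulr1.
move=> k' hk'; rewrite -big_distrr /=.
have -> : \sum_(i : idx n) U i k * (U i k')^* = 0.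
  transitivity ((k' == k)%:R : C); last by rewrite (negbTE hk').
  by rewrite -(HU k' k); apply: eq_bigr => i _; rewrite mulrC.
by rewrite mulr0.
Qed.

Lemma oracle_nrm2 (x : {ffun 'I_n -> bool}) (v : vec C n) : nrm2 (oracle x v) = nrm2 v.
Proof.
have inj : injective (fun j : idx n => (j.1, xorb j.2 (x j.1)) : idx n).
  apply: (can_inj (g := fun j : idx n => (j.1, xorb j.2 (x j.1)) : idx n)).
  by move=> [i b] /=; case: b; case: (x i).
by rewrite /nrm2 [RHS](reindex_inj inj).
Qed.

Lemma apply_sub (U : op C n) (u v : vec C n) j :
  apply U u j - apply U v j = apply U (fun k => u k - v k) j.
Proof. by rewrite /apply -sumrB; apply: eq_bigr => k _; rewrite mulrBr. Qed.

Lemma basis_nrm2 (a : idx n) : nrm2 (basis_vec C a) = 1.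
Proof.
rewrite /nrm2 (bigD1 a) //= big1 ?addr0.
  by rewrite /basis_vec eqxx normr1 expr1n.
by move=> j hj; rewrite /basis_vec (negbTE hj) normr0 expr0n.
Qed.


Lemma sum_pair (G : idx n -> C) :
  \sum_(j : idx n) G j = \sum_(i : 'I_n) \sum_(b : bool) G (i, b).
Proof. by rewrite pair_bigA; apply: eq_bigr => [[i b]] _. Qed.

Lemma nrm2_split (v : vec C n) b : nrm2 v = out_prob v b + out_prob v (~~ b).
Proof.
rewrite /nrm2 sum_pair /out_prob -big_split; apply: eq_bigr => i _.
by rewrite big_bool; case: b => //=; rewrite addrC.
Qed.

Lemma state_nrm2 (U : nat -> op C n) init z T :
  (forall t, (t <= T)%N -> unitary (U t)) ->
  forall t, (t <= T)%N -> nrm2 (state U init z t) = 1.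
Proof.
move=> HU; elim=> [|t IH] ht /=.
  by rewrite apply_nrm2 ?basis_nrm2 //; apply: HU.
rewrite apply_nrm2; last exact: HU.
by rewrite oracle_nrm2 IH //; exact: ltnW.
Qed.

Lemma id3 (a b : C) : 2 * (a ^+ 2 + b ^+ 2) - (a + b) ^+ 2 = (a - b) ^+ 2.
Proof. ring. Qed.

Lemma sq_sub (p q : C) : `|p - q| ^+ 2 <= 2 * (`|p| ^+ 2 + `|q| ^+ 2).
Proof.
apply: (le_trans (y := (`|p| + `|q|) ^+ 2)).
  by rewrite ler_pXn2r ?qualifE /= ?addr_ge0 // ler_normB.
rewrite -subr_ge0 id3; apply: sqr_real_ge0; apply: rpredB; exact: nn_real.
Qed.

Lemma two_sub (p q : C) : `|p - q| ^+ 2 + `|q - p| ^+ 2 <= 4 * (`|p| ^+ 2 + `|q| ^+ 2).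
Proof.
rewrite (distrC q p).
have -> : 4 * (`|p| ^+ 2 + `|q| ^+ 2) = 2 * (`|p| ^+ 2 + `|q| ^+ 2) + 2 * (`|p| ^+ 2 + `|q| ^+ 2).
  by rewrite -mulrDl -natrD.
by apply: lerD; apply: sq_sub.
Qed.

Lemma id4 (a b : C) : 70 * (a - b) ^+ 2 - (21 * a ^+ 2 - 30 * b ^+ 2) = (7 * a - 10 * b) ^+ 2.
Proof. ring. Qed.

Lemma pw (u v : C) : 21 * `|u| ^+ 2 - 30 * `|v| ^+ 2 <= 70 * `|u - v| ^+ 2.
Proof.
apply: (le_trans (y := 70 * (`|u| - `|v|) ^+ 2)).
  rewrite -subr_ge0 id4; apply: sqr_real_ge0.
  by apply: rpredB; apply: rpredM; rewrite ?rpred_nat //; exact: nn_real.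
rewrite ler_pM2l ?ltr0n // -real_normK; last by apply: rpredB; exact: nn_real.
by rewrite ler_pXn2r ?qualifE /= ?normr_ge0 // ler_dist_dist.
Qed.

Lemma id5 (D p q p' q' : C) : p' = 1 - p -> q' = 1 - q ->
  70 * (9 * D) - 70 = 9 * (70 * D - (21 * (p + q) - 30 * (q' + p')))
    + 153 * (p * 3 - 2) + 153 * (q * 3 - 2) + 2.
Proof. by move=> -> ->; ring. Qed.

End Aux.

Lemma id6 (C : numClosedFieldType) (a b c d : C) :
  21 * (a + b) - 30 * (c + d) = (21 * a - 30 * c) + (21 * b - 30 * d).
Proof. ring. Qed.

Lemma id7 (C : numClosedFieldType) (S : C) : (S * 6) ^+ 2 = 9 * (2 * S) ^+ 2.
Proof. ring. Qed.

Theorem corollary2p2 (C : numClosedFieldType) (n T : nat)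
  (f : {ffun 'I_n -> bool} -> bool) (U : nat -> op C n) (init : idx n) :
  computes T U init f ->
  forall x y : {ffun 'I_n -> bool}, f x != f y ->
  1 / 6%:R <= \sum_(t < T)
     sqrtC (\sum_(i : 'I_n | x i != y i) index_weight (state U init x t) i).
Proof.
move=> [HU Hout] x y fxy.
pose d t := sqrtC (nrm2 (fun j => state U init x t j - state U init y t j)).
pose e t := sqrtC (nrm2 (fun j => oracle x (state U init x t) j
                                 - oracle y (state U init x t) j)).
pose W t := \sum_(i : 'I_n | x i != y i) index_weight (state U init x t) i.
have W0 : forall t, 0 <= W t.
  by move=> t; apply: sumr_ge0 => i _; apply: sumr_ge0 => b _; rewrite exprn_ge0.
have step : forall t, (t < T)%N -> d t.+1 <= e t + d t.
  move=> t ht.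
  have -> : d t.+1 = sqrtC (nrm2 (fun j =>
      (oracle x (state U init x t) j - oracle y (state U init x t) j)
      + oracle y (fun k => state U init x t k - state U init y t k) j)).
    rewrite /d; congr sqrtC.
    rewrite (nrm2_ext (v := apply (U t.+1) (fun j => oracle x (state U init x t) j
                                  - oracle y (state U init y t) j))); last first.
      by move=> j; exact: (apply_sub (U t.+1) (oracle x (state U init x t))
                                   (oracle y (state U init y t)) j).
    rewrite apply_nrm2; last exact: HU.
    by apply: nrm2_ext => j; rewrite /oracle addrA subrK.
  apply: le_trans (nrm_triangle _ _) _.
  by rewrite oracle_nrm2.
have ebound : forall t, e t <= 2 * sqrtC (W t).
  move=> t; rewrite /e.
  have -> : 2 * sqrtC (W t) = sqrtC (4 * W t).
    rewrite sqrtCM ?qualifE /= ?ler0n ?W0 //.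
    by rewrite (_ : (4 : C) = 2 ^+ 2) ?sqrCK ?ler0n // -natrX.
  rewrite ler_sqrtC ?qualifE /= ?nrm2_ge0 ?mulr_ge0 ?ler0n ?W0 //.
  rewrite /nrm2 /W mulr_sumr sum_pair [leRHS]big_mkcond /=; apply: ler_sum => i _.
  rewrite /index_weight !big_bool /oracle /=.
  case: (x i); case: (y i) => /=.
  - by rewrite !subrr normr0 expr0n addr0.
  - by rewrite addrC two_sub.
  - by apply: two_sub.
  - by rewrite !subrr normr0 expr0n addr0.
have hybrid : forall t, (t <= T)%N -> d t <= \sum_(s < t) e s.
  elim=> [|t IH] ht.
    rewrite big_ord0 /d.
    have -> : nrm2 (fun j => state U init x 0 j - state U init y 0 j) = 0.
      by apply: big1 => j _; rewrite /= subrr normr0 expr0n.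
    by rewrite sqrtC0.
  rewrite big_ord_recr /= addrC; apply: le_trans (step t ht) _.
  by rewrite lerD2l; apply: IH; exact: ltnW.
set S := \sum_(t < T) _.
have S0 : 0 <= S by apply: sumr_ge0 => t _; rewrite sqrtC_ge0; exact: (W0 t).
have dS : d T <= 2 * S.
  apply: le_trans (hybrid T (leqnn T)) _.
  rewrite /S mulr_sumr; apply: ler_sum => t _; exact: ebound.
have fy : f y = ~~ f x by move: fxy; case: (f x); case: (f y).
have Hx := Hout x; have Hy := Hout y; rewrite fy in Hy.
move: (f x) Hx Hy => b0 Hx Hy.
rewrite ler_pdivrMr ?ltr0n // in Hx.
rewrite ler_pdivrMr ?ltr0n // in Hy.
have nx : nrm2 (state U init x T) = 1 := state_nrm2 init x HU (leqnn T).
have ny : nrm2 (state U init y T) = 1 := state_nrm2 init y HU (leqnn T).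
have px : out_prob (state U init x T) (~~ b0) = 1 - out_prob (state U init x T) b0.
  by rewrite -nx (nrm2_split _ b0) addrAC subrr add0r.
have py : out_prob (state U init y T) b0 = 1 - out_prob (state U init y T) (~~ b0).
  by rewrite -ny (nrm2_split _ (~~ b0)) negbK addrAC subrr add0r.
have main : 21 * (out_prob (state U init x T) b0 + out_prob (state U init y T) (~~ b0))
   - 30 * (out_prob (state U init y T) b0 + out_prob (state U init x T) (~~ b0))
   <= 70 * nrm2 (fun j => state U init x T j - state U init y T j).
  rewrite (nrm2_split _ b0) /out_prob id6 [leRHS]mulrDr.
  apply: lerD; rewrite !mulr_sumr -sumrB; apply: ler_sum => i _.
    exact: pw.
  rewrite distrC; exact: pw.
have D2 : 1 <= 9 * d T ^+ 2.
  rewrite /d sqrtCK.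
  have h : 0 <= 70 * (9 * nrm2 (fun j => state U init x T j - state U init y T j)) - 70.
    rewrite (id5 _ px py).
    rewrite !addr_ge0 ?mulr_ge0 ?ler0n // subr_ge0 //.
  by rewrite subr_ge0 -[X in X <= _]mulr1 ler_pM2l ?ltr0n in h.
rewrite ler_pdivrMr ?ltr0n //.
have d0 : 0 <= d T by rewrite sqrtC_ge0 nrm2_ge0.
have h1 : 1 <= (S * 6) ^+ 2.
  apply: le_trans D2 _.
  rewrite id7 ler_pM2l ?ltr0n // ler_pXn2r ?qualifE /= ?mulr_ge0 ?ler0n //.
by rewrite -(ler_pXn2r (n:=2)) ?qualifE /= ?expr1n ?mulr_ge0 ?ler0n.
Qed.
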